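(* Let $\mathcal{M}=(E,\rho)$ be a $q$-matroid with exactly one cyclic flat, $\mathcal{Z}(\mathcal{M})=\{\hat Z\}$ (so $\hat Z=\mathrm{cl}(0)=\mathrm{cyc}(E)$ and $\rho(\hat Z)=0$). Then for every subspace $V\le E$: $V$ is a flat if and only if $\hat Z\le V$, and $V$ is open (cyclic) if and only if $V\le\hat Z$. In particular, $\mathrm{cl}(0)=E$ if and only if $\mathcal{M}=\mathcal{U}_0(E)$, and $\mathrm{cyc}(E)=0$ if and only if $\mathcal{M}=\mathcal{U}_{\dim E}(E)$.
   Context: Let $\mathbb{F}=\mathbb{F}_q$. A $q$-matroid is $\mathcal{M}=(E,\rho)$, $E$ a finite-dimensional $\mathbb{F}$-vector space, $\rho$ from subspaces to $\mathbb{Z}_{\ge0}$ with $0\le\rho(V)\le\dim V$, monotone and submodular. Flat: $\rho(F+\langle x\rangle)>\rho(F)$ for all $x\notin F$. Closure: $\mathrm{cl}(V)=\sum\{\langle x\rangle:\rho(V+\langle x\rangle)=\rho(V)\}$. Cyclic core: $\mathrm{cyc}(V)=\{x\in V\mid\rho(W)=\rho(V)\text{ for all }W\le V\text{ with }W+\langle x\rangle=V\}$; $V$ is cyclic (equivalently open, i.e. a sum of circuits) if $\mathrm{cyc}(V)=V$. $\mathcal{Z}(\mathcal{M})$: set of cyclic flats. $\mathcal{U}_k(E)$ is the $q$-matroid with $\rho(V)=\min\{k,\dim V\}$. *)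

(* Defs.v *)
From HB Require Import structures.
From mathcomp Require Import all_boot all_order all_algebra all_field.
Set Implicit Arguments. Unset Strict Implicit. Unset Printing Implicit Defensive.
Import GRing.Theory.
Local Open Scope ring_scope.

Section QMatroid.
Variables (F : finFieldType) (vT : vectType F).

(* rank function axioms: 0 <= rho V <= dim V (0 <= automatic in nat),
   monotone, submodular *)
Definition qmatroid (rho : {vspace vT} -> nat) : Prop :=
  [/\ (forall V, (rho V <= \dim V)%N),
      (forall U V : {vspace vT}, (U <= V)%VS -> (rho U <= rho V)%N) &
      (forall U V : {vspace vT},
          (rho (U + V)%VS + rho (U :&: V)%VS <= rho U + rho V)%N)].

Definition qflat (rho : {vspace vT} -> nat) (W : {vspace vT}) : Prop :=
  forall x : vT, x \notin W -> (rho W < rho (W + <[x]>)%VS)%N.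

Definition qcl (rho : {vspace vT} -> nat) (V : {vspace vT}) : {vspace vT} :=
  (\sum_(x : finvect_type vT | rho (V + <[x : vT]>)%VS == rho V) <[x : vT]>)%VS.

Definition in_qcyc (rho : {vspace vT} -> nat) (V : {vspace vT}) (x : vT) : Prop :=
  x \in V /\
  forall W : {vspace vT}, (W <= V)%VS -> (W + <[x]>)%VS = V -> rho W = rho V.

Definition qcyclic (rho : {vspace vT} -> nat) (V : {vspace vT}) : Prop :=
  forall x : vT, in_qcyc rho V x <-> x \in V.

Definition qcyclic_flat (rho : {vspace vT} -> nat) (V : {vspace vT}) : Prop :=
  qflat rho V /\ qcyclic rho V.

Definition uniform_qmatroid (rho : {vspace vT} -> nat) (k : nat) : Prop :=
  forall V : {vspace vT}, rho V = minn k (\dim V).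

End QMatroid.

(* Main.v *)
Require Import Defs.
From HB Require Import structures.
From mathcomp Require Import all_boot all_order all_algebra all_field.
From mathcomp Require Import zify.
From Stdlib Require Import Classical.

Set Implicit Arguments. Unset Strict Implicit. Unset Printing Implicit Defensive.
Import GRing.Theory.
Local Open Scope ring_scope.

Section Aux.
Variables (F : finFieldType) (vT : vectType F).

Lemma ex_min_gen (P : {vspace vT} -> Prop) (f : {vspace vT} -> nat) V0 :
  P V0 -> exists V, P V /\ forall W, P W -> (f V <= f W)%N.
Proof.
move=> PV0.
suff H : forall k V, (f V <= k)%N -> P V -> exists V, P V /\ forall W, P W -> (f V <= f W)%N.
  exact: (H (f V0) V0).
elim=> [|k IH] V hV PV.
  by exists V; split=> // W _; lia.
destruct (classic (exists W, P W /\ (f W < f V)%N)) as [[W [PW lt]]|nex].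
  by apply: (IH W) => //; lia.
exists V; split => // W PW; rewrite leqNgt; apply/negP => lt; apply: nex; eauto.
Qed.

Lemma dim_line1 (x : vT) : (\dim <[x]> <= 1)%N.
Proof. by rewrite dim_vline; case: (x != 0%R). Qed.

Lemma dim_add_line (A : {vspace vT}) x : x \notin A -> \dim (A + <[x]>)%VS = (\dim A).+1.
Proof.
move=> xA.
have h1 : (\dim A < \dim (A + <[x]>))%N.
  rewrite (ltn_leqif (dimv_leqif_sup (addvSl A <[x]>))).
  apply/negP => /subvP h; apply/negP: xA; rewrite negbK; apply: h.
  exact: (subvP (addvSr A <[x]>) _ (memv_line x)).
have h2 := dimv_add_leqif A <[x]>.
have h3 := dim_line1 x.
move: (h2) => [h5 _]. lia.
Qed.

Lemma hyper (A V : {vspace vT}) x : (A <= V)%VS -> x \in V -> x \notin A ->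
  exists W : {vspace vT}, [/\ (A <= W)%VS, (W <= V)%VS, (W + <[x]> = V)%VS &
     (\dim W < \dim V)%N].
Proof.
move=> sAV xV xA.
set B := (A + <[x]>)%VS.
have sBV : (B <= V)%VS by rewrite subv_add sAV.
set C := (V :\: B)%VS.
exists (A + C)%VS; split.
- exact: addvSl.
- by rewrite subv_add sAV diffvSl.
- rewrite -addvA (addvC C) addvA -/B addvC /C addv_diff.
  exact/addv_idPl.
- have e1 := dimv_cap_compl V B.
  rewrite (capv_idPr sBV) in e1.
  have e2 : \dim B = (\dim A).+1 by exact: dim_add_line.
  have e3 := dimvS sBV.
  have [e4 _] := dimv_add_leqif A C.
  rewrite -/C in e1. lia.
Qed.

End Aux.

Section Main.
Variables (F : finFieldType) (vT : vectType F).
Variable rho : {vspace vT} -> nat.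
Hypothesis Hq : qmatroid rho.

Lemma rho_le V : (rho V <= \dim V)%N. Proof. by case: Hq. Qed.
Lemma rho_mono U V : (U <= V)%VS -> (rho U <= rho V)%N. Proof. by case: Hq => _ h _; apply: h. Qed.
Lemma rho_sub U V : (rho (U + V)%VS + rho (U :&: V)%VS <= rho U + rho V)%N.
Proof. by case: Hq => _ _ h; exact: h. Qed.

Lemma rho0 : rho 0%VS = 0%N.
Proof. by have := rho_le 0%VS; rewrite dimv0; lia. Qed.

Lemma rho_add U V : (rho (U + V)%VS <= rho U + rho V)%N.
Proof. by have := rho_sub U V; lia. Qed.

Lemma rho_line x : (rho <[x]> <= 1)%N.
Proof. have := rho_le <[x]>; have := dim_line1 x. lia. Qed.

Lemma rho_ext V U : (V <= U)%VS -> (rho U <= rho V + (\dim U - \dim V))%N.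
Proof.
move=> sVU.
have eU : (U :\: V + V)%VS = U by rewrite addv_diff; apply/addv_idPl.
have h := rho_add (U :\: V) V. rewrite eU in h.
have h2 := rho_le (U :\: V).
have e1 := dimv_cap_compl U V. rewrite (capv_idPr sVU) in e1.
lia.
Qed.

Lemma null_mono V U : (V <= U)%VS -> (\dim V - rho V <= \dim U - rho U)%N.
Proof.
move=> sVU. have := rho_ext sVU. have := rho_le V. have := rho_le U.
have := dimvS sVU. lia.
Qed.

Variable Zh : {vspace vT}.
Hypothesis Hcf : forall V : {vspace vT}, qcyclic_flat rho V <-> V = Zh.

Lemma Zh_flat : qflat rho Zh. Proof. by have [_ h] := Hcf Zh; case: (h erefl). Qed.

Lemma rhoZ0 : rho Zh = 0%N.
Proof.
have [Y [PY minY]] := @ex_min_gen F vT (fun V => rho V = 0%N)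
   (fun V => \dim (fullv : {vspace vT}) - \dim V)%N 0%VS rho0.
suff <- : Y = Zh by [].
apply/Hcf; split.
- move=> x xY. rewrite PY.
  case: (posnP (rho (Y + <[x]>)%VS)) => // h.
  have := minY _ h. rewrite dim_add_line //.
  have := dimvS (subvf (Y + <[x]>)%VS). rewrite dim_add_line //. lia.
- move=> x; split; first by case.
  move=> xY; split => // W sW _. have := rho_mono sW. lia.
Qed.

Lemma nullZ : (\dim Zh - rho Zh = \dim (fullv : {vspace vT}) - rho fullv)%N.
Proof.
set N := (\dim (fullv : {vspace vT}) - rho fullv)%N.
have [V0 [PV minV]] := @ex_min_gen F vT (fun V => \dim V - rho V = N)%N
   (fun V => \dim V) fullv erefl.
suff <- : V0 = Zh by [].
apply/Hcf; split.
- move=> x xV.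
  have := null_mono (subvf (V0 + <[x]>)%VS). rewrite -/N dim_add_line //.
  have := rho_le (V0 + <[x]>)%VS. rewrite dim_add_line //.
  have := rho_le V0. lia.
- move=> x; split; first by case.
  move=> xV; split => // W sW eW.
  have h1 := rho_mono sW.
  have h2 := rho_add W <[x]>. rewrite eW in h2.
  have h3 := rho_line x.
  have h4 := dimvS sW.
  have [h5 _] := dimv_add_leqif W <[x]>. rewrite eW in h5.
  have h6 := dim_line1 x.
  have h7 := rho_le W. have h8 := rho_le V0.
  have h9 := null_mono (subvf W). rewrite -/N in h9.
  have [e|ne] := eqVneq (\dim W - rho W)%N N.
    have := minV _ e. lia.
  lia.
Qed.

Lemma rhoF V : rho V = (\dim (V + Zh)%VS - \dim Zh)%N.
Proof.
have h1 := rho_mono (addvSl V Zh).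
have h2 := rho_ext (addvSr V Zh).
have h3 := rho_sub V Zh.
have h4 := null_mono (subvf (V + Zh)%VS).
have h5 := nullZ. have h6 := rhoZ0.
have h7 := rho_le (V + Zh)%VS.
have h8 := dimvS (addvSr V Zh).
lia.
Qed.

Lemma rho_line0 x : rho <[x]> = 0%N <-> x \in Zh.
Proof.
split.
- move=> h. case: (boolP (x \in Zh)) => // xZ.
  have := Zh_flat xZ. have := rho_add Zh <[x]>. rewrite rhoZ0 h. lia.
- move=> xZ. have := rho_mono (xZ : (<[x]> <= Zh)%VS). rewrite rhoZ0. lia.
Qed.

Lemma notcyc (V : {vspace vT}) x : x \in V -> x \notin Zh ->
  exists W, (W <= V)%VS /\ (W + <[x]>)%VS = V /\ rho W <> rho V.
Proof.
move=> xV xZ.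
have xA : x \notin (V :&: Zh)%VS by rewrite memv_cap xV.
have [W [sAW sWV eW lt]] := hyper (capvSl V Zh) xV xA.
exists W; split => //; split => // e.
have ec : (W :&: Zh)%VS = (V :&: Zh)%VS.
  apply: subv_anti; apply/andP; split.
    by rewrite subv_cap capvSr (subv_trans (capvSl _ _) sWV).
  by rewrite subv_cap sAW capvSr.
have := dimv_sum_cap W Zh. have := dimv_sum_cap V Zh. rewrite ec.
move: e; rewrite !rhoF.
have := dimvS (addvSr W Zh). have := dimvS (addvSr V Zh). lia.
Qed.

Lemma part1 : qcl rho 0%VS = Zh.
Proof.
rewrite /qcl; apply: subv_anti; apply/andP; split.
- apply/subv_sumP => x /eqP h. rewrite add0v rho0 in h.
  by have := proj1 (rho_line0 x) h.
- apply/subvP => z zZ.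
  have : (<[z]> <= \sum_(x : finvect_type vT | rho (0 + <[x : vT]>)%VS == rho 0%VS) <[x : vT]>)%VS.
    apply: (sumv_sup (z : finvect_type vT)); last exact: subvv.
    by rewrite add0v rho0; apply/eqP; apply/rho_line0.
  by move/subvP; apply; exact: memv_line.
Qed.

Lemma part2 x : in_qcyc rho fullv x <-> x \in Zh.
Proof.
split.
- move=> [_ h]. case: (boolP (x \in Zh)) => // xZ; exfalso.
  have [W [sW [eW ne]]] := notcyc (memvf x) xZ. by apply: ne; apply: h.
- move=> xZ; split; first exact: memvf.
  move=> W _ eW.
  have e : (W + Zh)%VS = fullv.
    apply: subv_anti; rewrite subvf /= -{1}eW. by apply: addvS; [exact: subvv|].
  by rewrite !rhoF e (addv_idPl (subvf Zh)).
Qed.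

End Main.

Theorem proposition4p8 (F : finFieldType) (vT : vectType F)
  (rho : {vspace vT} -> nat) (Zh : {vspace vT}) :
  qmatroid rho ->
  (forall V : {vspace vT}, qcyclic_flat rho V <-> V = Zh) ->
  [/\ qcl rho 0%VS = Zh,
      (forall x : vT, in_qcyc rho fullv x <-> x \in Zh),
      rho Zh = 0%N,
      (forall V : {vspace vT},
         (qflat rho V <-> (Zh <= V)%VS) /\ (qcyclic rho V <-> (V <= Zh)%VS)) &
      (qcl rho 0%VS = fullv <-> uniform_qmatroid rho 0) /\
      ((forall x : vT, in_qcyc rho fullv x <-> x = 0%R) <->
         uniform_qmatroid rho (\dim (fullv : {vspace vT})))].
Proof.
move=> Hq Hcf.
have P1 := part1 Hq Hcf. have P2 := part2 Hq Hcf. have Z0 := rhoZ0 Hq Hcf.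
have RF := rhoF Hq Hcf.
split => //.
- move=> V; split; split.
  + move=> hf. apply/subvP => z zZ. case: (boolP (z \in V)) => // zV; exfalso.
    have := hf z zV. have := rho_add Hq V <[z]>.
    rewrite (proj2 (rho_line0 Hq Hcf z) zZ). lia.
  + move=> sZ x xV. rewrite !RF (addv_idPl sZ).
    rewrite (addv_idPl (subv_trans sZ (addvSl V <[x]>))) dim_add_line //.
    have := dimvS sZ. lia.
  + move=> hc. apply/subvP => v vV. case: (boolP (v \in Zh)) => // vZ; exfalso.
    have [W [sW [eW ne]]] := notcyc Hq Hcf vV vZ. apply: ne.
    have [_ h] := proj2 (hc v) vV. exact: h.
  + move=> sV x; split; first by case.
    move=> xV; split => // W sW _.
    have := rho_mono Hq sW. have := rho_mono Hq sV. rewrite Z0. lia.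
- split; split.
  + rewrite P1 => eZ V. rewrite RF eZ addvf subnn. by rewrite min0n.
  + move=> hu. rewrite P1. have := hu fullv. rewrite RF (addv_idPl (subvf Zh)) min0n.
    move=> h. apply/eqP; rewrite eqEdim subvf /=. lia.
  + move=> h.
    have eZ : Zh = 0%VS.
      apply: subv_anti; rewrite sub0v andbT. apply/subvP => z zZ.
      by rewrite memv0; apply/eqP; apply/h; apply/P2.
    move=> V. rewrite RF eZ addv0 dimv0 subn0.
    have := dimvS (subvf V). lia.
  + move=> hu.
    have eZ : Zh = 0%VS.
      apply/eqP; rewrite -dimv_eq0. have := hu Zh. rewrite Z0.
      have := dimvS (subvf Zh). lia.
    move=> x. rewrite P2 eZ memv0. split; [by move/eqP | by move->].
Qed.
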